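(* Let $n\ge2$. For $a_{ij}\in\{\pm1\}$ ($1\le i<j\le n$) and $b_1,\dots,b_n\in\{\pm1\}$, define $$\mathcal B_{Zn}=\sum_{1\le i<j\le n}a_{ij}(b_i-b_j).$$ Then the maximum of $\mathcal B_{Zn}$ over all $\pm1$ assignments equals $\lfloor n^2/2\rfloor$. Consequently, for any local hidden variable model, $\langle\mathcal B_{Zn}\rangle_{\mathrm{LHV}}\le\lfloor n^2/2\rfloor$.
   Context: A local hidden variable model assigns, for a variable $\lambda$ distributed with a probability density $q$, outcomes $A(\lambda,i)\in\{\pm1\}$ to each of Alice's settings $i$ and $B(\lambda,j)\in\{\pm1\}$ to each of Bob's settings $j$; the correlation is $\langle\alpha_i\beta_j\rangle_{\mathrm{LHV}}=\int q(\lambda)A(\lambda,i)B(\lambda,j)\,d\lambda$, and $\langle\mathcal B\rangle_{\mathrm{LHV}}$ is obtained from the bilinear expression $\mathcal B$ by replacing each product $a_ib_j$ with $\langle\alpha_i\beta_j\rangle_{\mathrm{LHV}}$. $\lfloor x\rfloor$ is the largest integer $\le x$. *)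

(* Defs.v *)
From HB Require Import structures.
From mathcomp Require Import all_boot all_order all_algebra.
Set Implicit Arguments. Unset Strict Implicit. Unset Printing Implicit Defensive.
Import Order.TTheory GRing.Theory Num.Theory.
Local Open Scope ring_scope.

Definition pm1 {R : ringType} (x : R) : Prop := x = 1 \/ x = -1.

(* B_Zn = sum_{i<j} a_ij (b_i - b_j), indices 0..n-1 *)
Definition BZn {R : ringType} (n : nat) (a : 'I_n -> 'I_n -> R) (b : 'I_n -> R) : R :=
  \sum_(i < n) \sum_(j < n | (i < j)%N) a i j * (b i - b j).

(* Expectation with respect to a probability distribution of the hidden
   variable lambda : Lam, i.e. f |-> \int q(lambda) f(lambda) dlambda,
   axiomatised as a normalised positive linear functional. *)
Definition is_expectation {R : realFieldType} (Lam : Type) (E : (Lam -> R) -> R) : Prop :=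
  (forall f g, E (fun l => f l + g l) = E f + E g) /\
  (forall c f, E (fun l => c * f l) = c * E f) /\
  (forall f g, (forall l, f l <= g l) -> E f <= E g) /\
  E (fun _ => 1) = 1.

(* <B_Zn>_LHV : each product a_ij b_k replaced by <alpha_ij beta_k>_LHV *)
Definition BZn_LHV {R : realFieldType} (n : nat) (Lam : Type) (E : (Lam -> R) -> R)
  (A : Lam -> 'I_n -> 'I_n -> R) (B : Lam -> 'I_n -> R) : R :=
  \sum_(i < n) \sum_(j < n | (i < j)%N)
     (E (fun l => A l i j * B l i) - E (fun l => A l i j * B l j)).

(* Main.v *)
From Stdlib Require Import Lia ZArith FunctionalExtensionality.
Require Import Defs.
From HB Require Import structures.
From mathcomp Require Import all_boot all_order all_algebra.
Import Order.TTheory GRing.Theory Num.Theory.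
Lemma nat1 p q n : (p + q = n -> 2 * p * q <= n^2 %/ 2)%N.
Proof.
move=> <-; rewrite leq_divRL //; apply: leq_trans (nat_AGM2 p q).
by rewrite mulnC !mulnA.
Qed.

Lemma nat2 n : (2 * n./2 * (n - n./2) = n^2 %/ 2)%N.
Proof.
have h := odd_double_half n.
set k := n./2 in h *. rewrite -h. case: (odd n) => /=;
rewrite -!mul2n -mulnn; apply/eqP; rewrite eqn_leq; apply/andP; split.
all: try (rewrite leq_divRL //; apply/ssrnat.leP; rewrite -!plusE -!multE -!minusE; nia).
all: rewrite -ltnS ltn_divLR //; apply/ssrnat.leP; rewrite -!plusE -!multE -!minusE; nia.
Qed.

Lemma half_le n : (n./2 <= n)%N.
Proof. by rewrite leq_half_double -addnn leqW // leq_addr. Qed.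

Local Open Scope ring_scope.

Definition T {R : ringType} (n : nat) (F : nat -> nat -> R) : R :=
  \sum_(i < n) \sum_(j < n | (i < j)%N) F i j.

Lemma T_S (R : ringType) n (F : nat -> nat -> R) :
  T n.+1 F = T n F + \sum_(i < n) F i n.
Proof.
rewrite /T big_ord_recr /=.
rewrite [X in _ + X]big1 ?addr0; last first.
  by move=> j; rewrite ltnNge -ltnS ltn_ord.
rewrite -big_split /=; apply: eq_bigr => i _.
by rewrite big_mkcond big_ord_recr /= ltn_ord -big_mkcond.
Qed.

Lemma gen (R : numDomainType) (b : nat -> R) (hb : forall k, pm1 (b k)) n :
 exists p q : nat, [/\ (p + q = n)%N, \sum_(i<n) (1 - b i) = (2 * q)%:R,
    \sum_(i<n) (1 + b i) = (2 * p)%:R & T n (fun i j => 1 - b i * b j) = (2 * p * q)%:R].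
Proof.
elim: n => [|n [p [q [Hn H1 H2 H3]]]].
  by exists 0%N, 0%N; rewrite /T !big_ord0.
rewrite T_S !big_ord_recr /= H1 H2 H3.
case: (hb n) => ->.
- exists p.+1, q; split.
  + by rewrite addSn Hn.
  + by rewrite subrr addr0.
  + by rewrite mulnS natrD addrC.
  + rewrite (eq_bigr (fun i : 'I_n => 1 - b i)) ?H1; last by move=> i _; rewrite ?mulr1.
    by rewrite -natrD; congr (_%:R); rewrite -!multE -!plusE; lia.
- exists p, q.+1; split.
  + by rewrite addnS Hn.
  + by rewrite opprK mulnS natrD addrC.
  + by rewrite subrr addr0.
  + rewrite (eq_bigr (fun i : 'I_n => 1 + b i)) ?H2; last by move=> i _; rewrite mulrN1 opprK.
    by rewrite -natrD; congr (_%:R); rewrite -!multE -!plusE; lia.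
Qed.

Definition bk {R : ringType} (k i : nat) : R := if (i < k)%N then 1 else -1.

Lemma bk_sum (R : numDomainType) k n :
  \sum_(i < n) (1 + @bk R k i) = (2 * minn n k)%:R.
Proof.
elim: n => [|n IH]; first by rewrite big_ord0 min0n.
rewrite big_ord_recr /= IH /bk.
case: ltnP => h.
- rewrite (minn_idPl h) -mulr2n -natrD; congr (_%:R).
  by rewrite -!multE -!plusE; lia.
- by rewrite subrr addr0 (minn_idPr (leq_trans h (leqnSn n))).
Qed.

Lemma bk_T (R : numDomainType) k n :
  T n (fun i j => 1 - @bk R k i * bk k j) = (2 * minn n k * (n - k))%:R.
Proof.
elim: n => [|n IH]; first by rewrite /T big_ord0 min0n.
rewrite T_S IH.
case: (ltnP n k) => h.
- rewrite big1; last first.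
    by move=> i _; rewrite /bk h (ltn_trans (ltn_ord i) h) mulr1 subrr.
  have -> : (n - k = 0)%N by apply/eqP; rewrite subn_eq0 ltnW.
  have -> : (n.+1 - k = 0)%N by apply/eqP; rewrite subn_eq0.
  by rewrite !muln0 addr0.
- rewrite (eq_bigr (fun i : 'I_n => 1 + @bk R k i)); last first.
    by move=> i _; rewrite {2}/bk ltnNge h /= mulrN1 opprK.
  rewrite bk_sum -natrD (minn_idPr h) (minn_idPr (leq_trans h (leqnSn n))).
  by congr (_%:R); rewrite subSn // mulnS addnC.
Qed.
Lemma pw (R : realFieldType) (a x y : R) : pm1 a -> pm1 x -> pm1 y ->
  a * (x - y) <= 1 - x * y.
Proof.
case=> ->; case=> ->; case=> ->;
rewrite ?mul1r ?mulN1r ?mulr1 ?mulrN1 ?opprK ?subrr ?opprB ?opprK ?addNr ?oppr0 ?lexx //;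
rewrite -?opprD; apply: (@le_trans _ _ 0); rewrite ?oppr_le0 -mulr2n ler0n //.
Qed.

Lemma bound (R : realFieldType) m (a : 'I_m.+1 -> 'I_m.+1 -> R) (b : 'I_m.+1 -> R) :
  (forall i j : 'I_m.+1, (i < j)%N -> pm1 (a i j)) ->
  (forall i : 'I_m.+1, pm1 (b i)) ->
  BZn a b <= ((m.+1 ^ 2) %/ 2)%:R.
Proof.
move=> ha hb.
pose b' := fun k : nat => b (inord k).
have hb' : forall k, pm1 (b' k) by move=> k; apply: hb.
apply: (@le_trans _ _ (T m.+1 (fun i j => 1 - b' i * b' j))).
  rewrite /BZn /T; apply: ler_sum => i _; apply: ler_sum => j hij.
  by rewrite /b' !inord_val; apply: pw; [apply: ha | apply: hb | apply: hb].
have [p [q [Hn _ _ ->]]] := @gen R b' hb' m.+1.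
by rewrite ler_nat; apply: nat1.
Qed.

Lemma E_const (R : realFieldType) Lam (E : (Lam -> R) -> R) (hE : is_expectation E) c :
  E (fun _ => c) = c.
Proof.
case: hE => hD [hZ [hM h1]].
transitivity (E (fun l => c * (fun _ : Lam => 1) l)).
  by congr E; apply: functional_extensionality => l; rewrite mulr1.
by rewrite hZ h1 mulr1.
Qed.

Lemma E_sum (R : realFieldType) Lam (E : (Lam -> R) -> R) (hE : is_expectation E)
  (I : Type) (r : seq I) (P : pred I) (F : I -> Lam -> R) :
  E (fun l => \sum_(i <- r | P i) F i l) = \sum_(i <- r | P i) E (F i).
Proof.
have hE' := hE.
case: hE' => hD [hZ [hM h1]].
elim: r => [|x r IH].
  transitivity (E (fun _ => 0)).
    by congr E; apply: functional_extensionality => l; rewrite big_nil.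
  by rewrite E_const // big_nil.
transitivity (E (fun l => (if P x then F x l else 0) + \sum_(i <- r | P i) F i l)).
  congr E; apply: functional_extensionality => l; rewrite big_cons.
  by case: (P x); rewrite ?add0r.
rewrite hD IH big_cons; case: (P x) => //.
by rewrite E_const // add0r.
Qed.

Lemma E_sub (R : realFieldType) Lam (E : (Lam -> R) -> R) (hE : is_expectation E) f g :
  E (fun l => f l - g l) = E f - E g.
Proof.
case: hE => hD [hZ [hM h1]].
transitivity (E (fun l => f l + (-1) * g l)).
  by congr E; apply: functional_extensionality => l; rewrite mulN1r.
have -> : f = (fun l => f l) by [].
by rewrite hD hZ mulN1r.
Qed.

Theorem mainTheorem7 (R : realFieldType) (n : nat) (hn : (2 <= n)%N) :
  ((forall (a : 'I_n -> 'I_n -> R) (b : 'I_n -> R),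
      (forall i j : 'I_n, (i < j)%N -> pm1 (a i j)) ->
      (forall i : 'I_n, pm1 (b i)) ->
      BZn a b <= ((n ^ 2) %/ 2)%:R)
   /\ (exists (a : 'I_n -> 'I_n -> R) (b : 'I_n -> R),
      (forall i j : 'I_n, (i < j)%N -> pm1 (a i j)) /\
      (forall i : 'I_n, pm1 (b i)) /\
      BZn a b = ((n ^ 2) %/ 2)%:R))
  /\
  (forall (Lam : Type) (E : (Lam -> R) -> R)
          (A : Lam -> 'I_n -> 'I_n -> R) (B : Lam -> 'I_n -> R),
      is_expectation E ->
      (forall l (i j : 'I_n), (i < j)%N -> pm1 (A l i j)) ->
      (forall l (i : 'I_n), pm1 (B l i)) ->
      BZn_LHV E A B <= ((n ^ 2) %/ 2)%:R).
Proof.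
case: n hn => [//|m] hn.
split; [split|].
- by move=> a b ha hb; apply: bound.
- exists (fun _ _ => 1), (fun i : 'I_m.+1 => bk (m.+1)./2 i).
  split; first by move=> *; left.
  split; first by move=> i; rewrite /bk; case: ifP => _; [left|right].
  set k := (m.+1)./2.
  transitivity (T m.+1 (fun i j => 1 - @bk R k i * bk k j)).
    rewrite /BZn /T; apply: eq_bigr => i _; apply: eq_bigr => j hij.
    rewrite /bk; case: (ltnP i k) => hi; case: (ltnP j k) => hj;
      rewrite ?mul1r ?mulr1 ?mulN1r ?mulrN1 ?opprK ?subrr ?addNr //.
    by move: (ltn_trans (leq_trans hj hi) hij); rewrite ltnn.
  by rewrite bk_T (minn_idPr (half_le _)) nat2.
- move=> Lam E A B hE hA hB.
  have -> : BZn_LHV E A B = E (fun l => BZn (A l) (B l)).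
    rewrite /BZn_LHV /BZn (@E_sum R Lam E hE); apply: eq_bigr => i _.
    rewrite (@E_sum R Lam E hE); apply: eq_bigr => j _.
    rewrite -(@E_sub R Lam E hE); congr E; apply: functional_extensionality => l.
    by rewrite mulrBr.
  rewrite -[X in _ <= X](@E_const R Lam E hE).
  case: hE => hD [hZ [hM h1]].
  by apply: hM => l; apply: bound; [apply: hA | apply: hB].
Qed.
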